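(* Let $n\geq 2$ and $\alpha_2,\dots,\alpha_n\in\mathbb{C}$ with $\alpha_2\neq 0$. Then the transposed Poisson algebra $\mathbf{TP}(\alpha_2,\dots,\alpha_n)$ is isomorphic to $\mathbf{TP}(1,0,\dots,0)$, i.e. to $\mu_0^n$ with $e_i\cdot e_j=e_{i+j}$ ($2\leq i+j\leq n$) and $[e_i,e_j]=(j-i)e_{i+j-1}$ ($3\leq i+j\leq n+1$).
   Context: $\mu_0^n$ is the complex commutative associative algebra with basis $\{e_1,\dots,e_n\}$ and $e_i\cdot e_j=e_{i+j}$ for $2\leq i+j\leq n$, other products zero. For $\alpha_2,\dots,\alpha_n\in\mathbb{C}$, $\mathbf{TP}(\alpha_2,\dots,\alpha_n)$ denotes $\mu_0^n$ with its associative product together with the bracket $[e_i,e_j]=(j-i)\sum_{t=i+j-1}^{n}\alpha_{t-i-j+3}e_t$ for $3\leq i+j\leq n+1$, other brackets of basis elements zero. Isomorphisms are linear bijections preserving both operations. *)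

(* Defs.v *)
From HB Require Import structures.
From mathcomp Require Import all_boot all_order all_algebra.
From mathcomp Require Import complex.
From mathcomp Require Import Rstruct.
Set Implicit Arguments. Unset Strict Implicit. Unset Printing Implicit Defensive.
Import Order.TTheory GRing.Theory Num.Theory.
Local Open Scope ring_scope.

Notation CC := (complex Rdefinitions.R).

(* Vectors of C^n, the underlying space of mu_0^n; coordinate j : 'I_n
   (0-based) is the coefficient of e_(j+1). *)
Definition ebase (n k : nat) : 'rV[CC]_n := \row_(j < n) ((j.+1 == k)%:R).

Definition bilin (n : nat) (f : nat -> nat -> 'rV[CC]_n) (u v : 'rV[CC]_n)
  : 'rV[CC]_n :=
  \sum_(i < n) \sum_(j < n) (u 0 i * v 0 j) *: f i.+1 j.+1.

Definition dotE (n : nat) (a b : nat) : 'rV[CC]_n :=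
  if (a + b <= n)%N then ebase n (a + b) else 0.

(* TP(alpha_2,...,alpha_n) bracket (only alpha 2 .. alpha n are used):
   [e_a,e_b] = (b-a) sum_(t=a+b-1)^n alpha_(t-a-b+3) e_t  if 3 <= a+b <= n+1. *)
Definition brE (n : nat) (alpha : nat -> CC) (a b : nat) : 'rV[CC]_n :=
  if (3 <= a + b <= n.+1)%N then
    (b%:R - a%:R) *: \sum_((a + b).-1 <= t < n.+1) alpha (t + 3 - (a + b))%N *: ebase n t
  else 0.

Definition alpha_std (k : nat) : CC := if k == 2%N then 1 else 0.

Definition TP_isomorphic (n : nat) (alpha beta : nat -> CC) : Prop :=
  exists phi : 'rV[CC]_n -> 'rV[CC]_n,
    [/\ linear phi, bijective phi,
        forall u v, phi (bilin (@dotE n) u v) = bilin (@dotE n) (phi u) (phi v)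
      & forall u v, phi (bilin (@brE n alpha) u v) = bilin (@brE n beta) (phi u) (phi v)].

(* Main.v *)
From HB Require Import structures.
Require Import Defs.
From mathcomp Require Import all_boot all_order all_algebra complex Rstruct.
From mathcomp Require Import ring zify.
Set Implicit Arguments. Unset Strict Implicit. Unset Printing Implicit Defensive.
Import Order.TTheory GRing.Theory Num.Theory.
Local Open Scope ring_scope.

Section S.
Variable n : nat.
Local Notation N := n.+1.
Implicit Types p q r s psi : {poly CC}.

Definition toP (u : 'rV[CC]_n) : {poly CC} := \sum_(i < n) u 0 i *: 'X^(i.+1).
Definition fromP (p : {poly CC}) : 'rV[CC]_n := \row_(j < n) p`_j.+1.

Lemma fromPD p q : fromP (p + q) = fromP p + fromP q.
Proof. by apply/rowP => j; rewrite !mxE coefD. Qed.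
Lemma fromPZ c p : fromP (c *: p) = c *: fromP p.
Proof. by apply/rowP => j; rewrite !mxE coefZ. Qed.
Lemma fromP0 : fromP 0 = 0.
Proof. by apply/rowP => j; rewrite !mxE coef0. Qed.
Lemma fromP_sum I (r : seq I) (F : I -> {poly CC}) :
  fromP (\sum_(i <- r) F i) = \sum_(i <- r) fromP (F i).
Proof. exact: (big_morph _ fromPD fromP0). Qed.
Lemma fromPXn k : fromP 'X^k = ebase n k.
Proof. by apply/rowP => j; rewrite !mxE coefXn. Qed.
Lemma fromP_MXN r : fromP (r * 'X^N) = 0.
Proof. by apply/rowP => j; rewrite !mxE coefMXn ltnS ltn_ord. Qed.

Lemma toPD u v : toP (u + v) = toP u + toP v.
Proof. by rewrite /toP -big_split; apply: eq_bigr => i _; rewrite mxE scalerDl. Qed.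
Lemma toPZ c u : toP (c *: u) = c *: toP u.
Proof. by rewrite /toP scaler_sumr; apply: eq_bigr => i _; rewrite mxE scalerA. Qed.

Lemma coef_toP u k : (toP u)`_k = \sum_(i < n) u 0 i * (k == i.+1)%:R.
Proof. by rewrite /toP coef_sum; apply: eq_bigr => i _; rewrite coefZ coefXn. Qed.
Lemma coef_toP0 u : (toP u)`_0 = 0.
Proof. by rewrite coef_toP big1 // => i _; rewrite mulr0. Qed.
Lemma coef_toPS u (i : 'I_n) : (toP u)`_i.+1 = u 0 i.
Proof.
rewrite coef_toP (bigD1 i) //= eqxx mulr1 big1 ?addr0 // => j /negPf ji.
have -> : (i.+1 == j.+1)%N = false by rewrite eqSS; apply/negP => /eqP h; move/negP: ji; apply; apply/eqP/val_inj.
by rewrite mulr0.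
Qed.
Lemma coef_toP_big u k : (n < k)%N -> (toP u)`_k = 0.
Proof.
move=> nk; rewrite coef_toP big1 // => i _.
have -> : (k == i.+1) = false by apply/negP => /eqP ki; move: (ltn_ord i); lia.
by rewrite mulr0.
Qed.

Lemma fromP_toP u : fromP (toP u) = u.
Proof. by apply/rowP => j; rewrite mxE coef_toPS. Qed.

Definition eqm p q := exists r, p = q + r * 'X^N.

Lemma eqm_refl p : eqm p p.
Proof. by exists 0; rewrite mul0r addr0. Qed.
Lemma eqm_sym p q : eqm p q -> eqm q p.
Proof. by case=> r ->; exists (- r); rewrite mulNr addrK. Qed.
Lemma eqm_trans p q s : eqm p q -> eqm q s -> eqm p s.
Proof. by case=> r -> [t ->]; exists (t + r); rewrite mulrDl addrA. Qed.
Lemma eqm_fromP p q : eqm p q -> fromP p = fromP q.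
Proof. by case=> r ->; rewrite fromPD fromP_MXN addr0. Qed.
Lemma eqm_mul p q p1 q1 : eqm p p1 -> eqm q q1 -> eqm (p * q) (p1 * q1).
Proof.
case=> r -> [s ->]; exists (p1 * s + r * q1 + r * s * 'X^N); ring.
Qed.
Lemma eqm_add p q p1 q1 : eqm p p1 -> eqm q q1 -> eqm (p + q) (p1 + q1).
Proof. case=> r -> [s ->]; exists (r + s); ring. Qed.

Lemma take1 p : take_poly 1 p = (p`_0)%:P.
Proof. by apply/polyP => k; rewrite coef_take_poly coefC; case: k. Qed.
Lemma splitX p : p = (p`_0)%:P + drop_poly 1 p * 'X.
Proof. by rewrite -take1 -[X in _ * X]expr1 poly_take_drop. Qed.

Lemma toP_fromP p : p`_0 = 0 -> eqm (toP (fromP p)) p.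
Proof.
move=> p0; exists (- drop_poly N p).
have E := poly_take_drop N p.
suff -> : toP (fromP p) = take_poly N p.
  by move: E; set t := take_poly N p; set d := drop_poly N p => E; rewrite -E mulNr addrK.
apply/polyP => k; rewrite coef_take_poly.
case: k => [|k]; first by rewrite coef_toP0 p0 /=.
case: (ltnP k n) => kn.
  by rewrite (coef_toPS _ (Ordinal kn)) mxE /= ltnS kn.
by rewrite coef_toP_big // ltnNge ltnS kn.
Qed.

Lemma comp_Xn k psi : 'X^k \Po psi = psi ^+ k.
Proof.
elim: k => [|k IH]; first by rewrite !expr0 comp_polyC.
by rewrite !exprS comp_polyM comp_polyX IH.
Qed.

Lemma coef0_comp p psi : psi`_0 = 0 -> (p \Po psi)`_0 = p`_0.
Proof.
move=> z; rewrite {1}(splitX p) comp_polyD comp_polyC comp_polyM comp_polyX.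
rewrite coefD coefC /= {2}(splitX psi) z add0r mulrA coefMX /= addr0 //.
Qed.

Lemma eqm_comp p q psi : psi`_0 = 0 -> eqm p q -> eqm (p \Po psi) (q \Po psi).
Proof.
move=> z [r ->]; exists ((r \Po psi) * (drop_poly 1 psi) ^+ N).
have Hs : psi = drop_poly 1 psi * 'X by rewrite {1}(splitX psi) z polyC0 add0r.
rewrite comp_polyD comp_polyM comp_Xn [in psi ^+ N]Hs exprMn; ring.
Qed.


Definition W (A p q : {poly CC}) := (p * q^`() - p^`() * q) * A.

Lemma eqm_W A p q p1 q1 : eqm p p1 -> eqm q q1 -> p1`_0 = 0 -> q1`_0 = 0 ->
  eqm (W A p q) (W A p1 q1).
Proof.
case=> r -> [s ->] hp hq.
have Hp : p1 = drop_poly 1 p1 * 'X by rewrite {1}(splitX p1) hp polyC0 add0r.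
have Hq : q1 = drop_poly 1 q1 * 'X by rewrite {1}(splitX q1) hq polyC0 add0r.
move: Hp Hq; set a := drop_poly 1 p1; set b := drop_poly 1 q1 => Hp Hq.
rewrite Hp Hq.
exists (A * (a * s^`() * 'X + (a * s) *+ N + r * (b * 'X + s * 'X^N)^`()
   - (a * 'X)^`() * s - r^`() * (b * 'X + s * 'X^N) - (r * b) *+ N - (r * s * 'X^n) *+ N)).
rewrite /W !(derivD, derivM, derivXn, derivX) /= !exprSr.
ring.
Qed.

Lemma sum_ind m M c (F : nat -> CC) :
  \sum_(m <= t < M) F t * (c == t)%:R = if (m <= c < M)%N then F c else 0.
Proof.
elim: M => [|M IH]; first by rewrite big_geq // ltn0 andbF.
case: (leqP m M) => hm.
  rewrite big_nat_recr //= IH.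
  have [->|ne] := eqVneq c M.
    by rewrite ltnn andbF mulr1 add0r hm ltnSn.
  rewrite mulr0 addr0.
  have -> : (m <= c < M.+1)%N = (m <= c < M)%N.
    by apply/idP/idP; move: ne; lia.
  by [].
rewrite big_geq //.
have -> : (m <= c < M.+1)%N = false by apply/negP; lia.
by [].
Qed.

Lemma bilin_gen (f : nat -> nat -> 'rV[CC]_n) (G : {poly CC} -> {poly CC} -> {poly CC}) :
  (forall p1 p2 q, G (p1 + p2) q = G p1 q + G p2 q) ->
  (forall c p q, G (c *: p) q = c *: G p q) ->
  (forall p q1 q2, G p (q1 + q2) = G p q1 + G p q2) ->
  (forall c p q, G p (c *: q) = c *: G p q) ->
  (forall i j : 'I_n, f i.+1 j.+1 = fromP (G 'X^(i.+1) 'X^(j.+1))) ->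
  forall u v, bilin f u v = fromP (G (toP u) (toP v)).
Proof.
move=> Gl Zl Gr Zr Hf u v.
have G0l q : G 0 q = 0 by have := Zl 0 0 q; rewrite !scale0r.
have G0r p : G p 0 = 0 by have := Zr 0 p 0; rewrite !scale0r.
have Gsl q : {morph (fun p => G p q) : x y / x + y} by move=> x y; exact: Gl.
have Gsr p : {morph (fun q => G p q) : x y / x + y} by move=> x y; exact: Gr.
rewrite /bilin /toP (big_morph _ (Gsl _) (G0l _)) fromP_sum.
apply: eq_bigr => i _; rewrite Zl (big_morph _ (Gsr _) (G0r _)).
rewrite scaler_sumr fromP_sum; apply: eq_bigr => j _.
by rewrite Zr scalerA fromPZ Hf.
Qed.

Lemma dotE_eq a b : dotE n a b = ebase n (a + b).
Proof.
rewrite /dotE; case: ifP => // h; apply/rowP => j; rewrite !mxE.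
have -> : (j.+1 == a + b)%N = false by apply/negP => /eqP e; move: (ltn_ord j) h; lia.
by [].
Qed.

Lemma bilin_dot u v : bilin (@dotE n) u v = fromP (toP u * toP v).
Proof.
apply: bilin_gen.
- by move=> *; rewrite mulrDl.
- by move=> *; rewrite scalerAl.
- by move=> *; rewrite mulrDr.
- by move=> *; rewrite scalerAr.
- by move=> i j; rewrite dotE_eq -fromPXn exprD.
Qed.

Definition Apoly (alpha : nat -> CC) : {poly CC} := \poly_(k < n) alpha k.+2.

Lemma W_X A i j : W A 'X^(i.+1) 'X^(j.+1) =
  ((j.+1)%:R - (i.+1)%:R : CC) *: ('X^((i + j).+1) * A).
Proof.
rewrite /W !derivXn !succnK -(mulr_natr ('X^j) j.+1) -(mulr_natr ('X^i) i.+1).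
rewrite -mul_polyC rmorphB !rmorph_nat !exprS exprD; ring.
Qed.

Lemma brE_X alpha (i j : 'I_n) :
  brE n alpha i.+1 j.+1 = fromP (W (Apoly alpha) 'X^(i.+1) 'X^(j.+1)).
Proof.
rewrite W_X; apply/rowP => k; rewrite [RHS]mxE coefZ coefXnM coef_poly.
have kn := ltn_ord k; have i_n := ltn_ord i; have jn := ltn_ord j.
rewrite /brE; case: ifP => hc.
  rewrite mxE summxE.
  under eq_bigr => t _ do rewrite !mxE.
  rewrite sum_ind; congr (_ * _).
  case: (ltnP k.+1 (i + j).+1) => h1.
    by have -> : ((i.+1 + j.+1).-1 <= k.+1 < n.+1)%N = false by apply/negP; lia.
  have -> : ((i.+1 + j.+1).-1 <= k.+1 < n.+1)%N = true by apply/idP; lia.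
  have -> : (k.+1 - (i + j).+1 < n)%N = true by apply/idP; move: hc; lia.
  by congr alpha; lia.
rewrite mxE.
case: (ltnP k.+1 (i + j).+1) => h1; first by rewrite mulr0.
have ij0 : (i = 0 :> nat) /\ (j = 0 :> nat) by move: hc; lia.
by case: ij0 => -> ->; rewrite subrr mul0r.
Qed.

Lemma bilin_br alpha u v :
  bilin (@brE n alpha) u v = fromP (W (Apoly alpha) (toP u) (toP v)).
Proof.
apply: bilin_gen; last exact: brE_X.
- by move=> *; rewrite /W derivD; ring.
- by move=> *; rewrite /W derivZ -!mul_polyC; ring.
- by move=> *; rewrite /W derivD; ring.
- by move=> *; rewrite /W derivZ -!mul_polyC; ring.
Qed.


Lemma Apoly_std : (0 < n)%N -> Apoly alpha_std = 1.
Proof.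
move=> n0; apply/polyP => k; rewrite coef_poly coef1 /alpha_std.
case: k => [|k]; first by rewrite n0.
by case: ifP.
Qed.

Lemma Apoly0 alpha : (0 < n)%N -> (Apoly alpha)`_0 = alpha 2%N.
Proof. by move=> n0; rewrite coef_poly n0. Qed.

Lemma inv_series (A : {poly CC}) : A`_0 != 0 ->
  exists B E, A * B = 1 - 'X^n * E.
Proof.
move=> a0n; set a0 := A`_0.
set c := (a0^-1)%:P; set D := drop_poly 1 A.
have h : a0%:P * c = 1 by rewrite -polyCM mulfV.
set y := (- (c * D)) * 'X.
have HS := subrX1 y n.
set S := \sum_(i < n) y ^+ i in HS.
exists (c * S), ((- (c * D)) ^+ n).
have HA : A = a0%:P * (1 - y).
  have -> : a0%:P * (1 - y) = a0%:P + (a0%:P * c) * D * 'X by rewrite /y; ring.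
  by rewrite h mul1r {1}(splitX A).
rewrite HA.
have -> : a0%:P * (1 - y) * (c * S) = (a0%:P * c) * (- ((y - 1) * S)) by ring.
by rewrite h mul1r -HS /y exprMn; ring.
Qed.

Definition integ (B : {poly CC}) : {poly CC} :=
  \poly_(i < (size B).+1) (if i is i'.+1 then B`_i' / (i'.+1)%:R else 0).

Lemma integ_deriv B : (integ B)^`() = B.
Proof.
apply/polyP => k; rewrite coef_deriv coef_poly ltnS.
case: ifP => hk.
  by rewrite -(mulr_natr (B`_k / (k.+1)%:R) k.+1) divfK // pnatr_eq0.
by rewrite mul0rn nth_default // leqNgt hk.
Qed.

Lemma integ0 B : (integ B)`_0 = 0.
Proof. by rewrite coef_poly ltn0Sn. Qed.

Lemma integ1 B : (integ B)`_1 = B`_0.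
Proof.
rewrite coef_poly ltnS; case: ifP => h; first by rewrite divr1.
by rewrite nth_default // leqNgt h.
Qed.


Definition Psi (psi : {poly CC}) (u : 'rV[CC]_n) : 'rV[CC]_n := fromP (toP u \Po psi).

Lemma Psi_lin psi : linear (Psi psi).
Proof. by move=> a u v; rewrite /Psi toPD toPZ comp_polyD comp_polyZ fromPD fromPZ. Qed.

Lemma coef0_toP_comp psi u : psi`_0 = 0 -> (toP u \Po psi)`_0 = 0.
Proof. by move=> z; rewrite coef0_comp // coef_toP0. Qed.

Lemma eqm_toP_Psi psi u : psi`_0 = 0 -> eqm (toP (Psi psi u)) (toP u \Po psi).
Proof. by move=> z; apply: toP_fromP; apply: coef0_toP_comp. Qed.

Lemma Psi_dot psi u v : psi`_0 = 0 ->
  Psi psi (bilin (@dotE n) u v) = bilin (@dotE n) (Psi psi u) (Psi psi v).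
Proof.
move=> z; rewrite !bilin_dot /Psi.
have h0 : (toP u * toP v)`_0 = 0 by rewrite coef0M coef_toP0 mul0r.
rewrite (eqm_fromP (eqm_comp z (toP_fromP h0))) comp_polyM.
apply/esym/eqm_fromP/eqm_mul; exact: toP_fromP (coef0_toP_comp _ z).
Qed.

Lemma ring_aux1 (a b c d e f : {poly CC}) :
  (a * (b * c) - d * c * e) * f = (a * b - d * e) * (f * c).
Proof. ring. Qed.

Lemma ring_aux2 (d x y E : {poly CC}) :
  d * x * (1 - y * E) = d * x + - (d * E) * (y * x).
Proof. ring. Qed.

Lemma Psi_br psi alpha (E : {poly CC}) : (0 < n)%N -> psi`_0 = 0 ->
  Apoly alpha * psi^`() = 1 - 'X^n * E ->
  forall u v, Psi psi (bilin (@brE n alpha_std) u v) =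
              bilin (@brE n alpha) (Psi psi u) (Psi psi v).
Proof.
move=> n0 z HD u v; rewrite !bilin_br /Psi Apoly_std //.
set pu := toP u; set pv := toP v.
have h0 : (W 1 pu pv)`_0 = 0.
  by rewrite /W coef0M coefB !coef0M /pu /pv !coef_toP0 mul0r mulr0 subr0 mul0r.
rewrite (eqm_fromP (eqm_comp z (toP_fromP h0))).
rewrite (eqm_fromP (eqm_W _ (toP_fromP (coef0_toP_comp _ z)) (toP_fromP (coef0_toP_comp _ z))
   (coef0_toP_comp _ z) (coef0_toP_comp _ z))).
apply/esym/eqm_fromP.
set Q := (pu * pv^`() - pu^`() * pv) \Po psi.
have hQ : Q`_0 = 0 by rewrite /Q coef0_comp // coefB !coef0M /pu /pv !coef_toP0 mul0r mulr0 subr0.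
have HQ : Q = drop_poly 1 Q * 'X by rewrite {1}(splitX Q) hQ polyC0 add0r.
exists (- (drop_poly 1 Q * E)).
have -> : W (Apoly alpha) (pu \Po psi) (pv \Po psi) = Q * (Apoly alpha * psi^`()).
  rewrite /W /Q !deriv_comp comp_polyB !comp_polyM.
  exact: ring_aux1.
rewrite HD /W mulr1 -/Q exprSr; move: HQ; set d := drop_poly 1 Q => HQ.
rewrite HQ; exact: ring_aux2.
Qed.

Lemma coef0X p m : (p ^+ m)`_0 = p`_0 ^+ m.
Proof. by elim: m => [|m IH]; rewrite ?expr0 ?coef1 // !exprS coef0M IH. Qed.

Lemma coef_comp_low psi p m : psi`_0 = 0 -> (forall j, (j < m)%N -> p`_j = 0) ->
  (p \Po psi)`_m = p`_m * psi`_1 ^+ m.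
Proof.
move=> z hp.
have Ht : take_poly m p = 0.
  by apply/polyP => k; rewrite coef_take_poly coef0; case: ifP => // /hp.
have Hp : p = drop_poly m p * 'X^m by rewrite -{1}(poly_take_drop m p) Ht add0r.
have Hs : psi = drop_poly 1 psi * 'X by rewrite {1}(splitX psi) z polyC0 add0r.
rewrite {1}Hp comp_polyM comp_Xn [in psi ^+ m]Hs exprMn mulrA coefMXn ltnn subnn.
by rewrite coef0M coef0_comp // coef_drop_poly add0n coef0X coef_drop_poly.
Qed.

Lemma Psi_inj psi u : psi`_0 = 0 -> psi`_1 != 0 -> Psi psi u = 0 -> u = 0.
Proof.
move=> z c0 H0.
have key : forall m, (m <= n)%N -> forall j, (j <= m)%N -> (toP u)`_j = 0.
  elim=> [|m IH] hm j hj.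
    by move: hj; rewrite leqn0 => /eqP ->; rewrite coef_toP0.
  case: (leqP j m) => hjm; first by apply: IH => //; apply: ltnW.
  have -> : j = m.+1 by apply/eqP; rewrite eqn_leq hj hjm.
  have := congr1 (fun w : 'rV[CC]_n => w 0 (Ordinal hm)) H0.
  rewrite /Psi !mxE /= (coef_comp_low z) => [|k hk]; last by apply: IH; [apply: ltnW | ].
  by move/eqP; rewrite mulf_eq0 expf_eq0 (negPf c0) andbF orbF => /eqP.
apply/rowP => i; rewrite -coef_toPS (key n) ?mxE //.
Qed.

End S.

HB.instance Definition _ (n : nat) (psi : {poly CC}) :=
  GRing.isLinear.Build CC 'rV[CC]_n 'rV[CC]_n *:%R (@Psi n psi) (@Psi_lin n psi).

Theorem mainTheorem7 (n : nat) (alpha : nat -> CC) :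
  (2 <= n)%N -> alpha 2%N != 0 -> TP_isomorphic n alpha alpha_std.
Proof.
move=> n2 a2.
have n0 : (0 < n)%N by apply: leq_trans n2.
have A0 : (Apoly n alpha)`_0 != 0 by rewrite Apoly0.
have [B [E HB]] := inv_series n A0.
set psi := integ B.
have z : psi`_0 = 0 by rewrite integ0.
have HD : Apoly n alpha * psi^`() = 1 - 'X^n * E by rewrite integ_deriv.
have c0 : psi`_1 != 0.
  rewrite integ1; apply/negP => /eqP b0.
  have := congr1 (fun p : {poly CC} => p`_0) HB.
  rewrite /= coef0M b0 mulr0 coefB coef1 coef0M coefXn.
  have -> : (0 == n)%N = false by apply/negbTE; rewrite eq_sym -lt0n.
  by rewrite mul0r subr0 => /eqP; rewrite eq_sym oner_eq0.
set M := lin1_mx (@Psi n psi).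
have HM u : u *m M = Psi psi u by rewrite mul_rV_lin1.
have Mu : M \in unitmx.
  rewrite -row_free_unit -kermx_eq0; apply/eqP/row_matrixP => i.
  rewrite row0; apply: (Psi_inj z c0).
  by rewrite -HM -row_mul mulmx_ker row0.
pose phi (u : 'rV[CC]_n) := u *m invmx M.
have K1 u : Psi psi (phi u) = u by rewrite -HM /phi mulmxKV.
have K2 u : phi (Psi psi u) = u by rewrite -HM /phi mulmxK.
exists phi; split.
- by move=> a u v; rewrite /phi mulmxDl scalemxAl.
- by exists (Psi psi).
- move=> u v; rewrite -{1}(K1 u) -{1}(K1 v) -Psi_dot //.
- move=> u v; rewrite -{1}(K1 u) -{1}(K1 v) -(Psi_br n0 z HD) //.
Qed.
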